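(* Let $G=(V,E)$ be a connected undirected graph on $n$ nodes with Laplacian $L$, let $\kappa_1,\dots,\kappa_n>0$, $D_\kappa=\mathrm{diag}(\kappa_1,\dots,\kappa_n)$, and for $S\subseteq V$ let $Q_S=L+D_\kappa D_S$, where $D_S$ is the diagonal $0/1$ matrix with $(D_S)_{ii}=1$ iff $i\in S$ (write $Q_v$ for $Q_{\{v\}}$). For nonempty $S$ let $H(S)=\frac12\mathrm{tr}(Q_S^{-1})$. Let $k\ge1$ be an integer, let $\hat H=\min\{H(S): S\subseteq V,\ S\neq\emptyset,\ |S|\le k\}$, and let $B=\max_{v\in V}\mathrm{tr}(Q_v^{-1})$. Let $S_s$ be the output of the following Swap Algorithm: start from an arbitrary set $S\subseteq V$ with $|S|=k$; while there exist $i\in S$ and $j\in V\setminus S$ with $\mathrm{tr}(Q_{(S\cup\{j\})\setminus\{i\}}^{-1})<\mathrm{tr}(Q_S^{-1})$, replace $S$ by $(S\cup\{j\})\setminus\{i\}$; when no such pair exists, return $S$. Then $$H(S_s)\le\left(1-\frac{k-1}{2k-1}\right)\hat H+B\,\frac{k-1}{2k-1}.$$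
   Context: For nonempty $S$, $Q_S$ is positive definite. $H(S)$ is the total steady-state variance of the leader–follower consensus dynamics $\dot x=-(L+D_\kappa D_S)x+w$ with white noise $w$, where $S$ is the set of leaders; the $k$-leader selection problem asks to minimize $H(S)$ subject to $|S|\le k$. *)

(* Defs.v *)
From HB Require Import structures.
From mathcomp Require Import all_boot all_order all_algebra.
From mathcomp Require Import fingraph.
From mathcomp Require Import reals.
Set Implicit Arguments. Unset Strict Implicit. Unset Printing Implicit Defensive.
Import Order.TTheory GRing.Theory Num.Theory.
Local Open Scope ring_scope.

Definition simple_graph (n : nat) (e : rel 'I_n) : Prop :=
  symmetric e /\ irreflexive e.

Definition connected_graph (n : nat) (e : rel 'I_n) : Prop :=
  forall i j : 'I_n, connect e i j.

Definition laplacian (R : ringType) (n : nat) (e : rel 'I_n) : 'M[R]_n :=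
  \matrix_(i, j) (if i == j then (#|[set l | e i l]|)%:R else - (e i j)%:R).

Definition QS (R : ringType) (n : nat) (e : rel 'I_n) (kappa : 'I_n -> R)
    (S : {set 'I_n}) : 'M[R]_n :=
  laplacian R e + diag_mx (\row_i (kappa i * (i \in S)%:R)).

Definition Hcost (R : fieldType) (n : nat) (e : rel 'I_n) (kappa : 'I_n -> R)
    (S : {set 'I_n}) : R :=
  2^-1 * \tr (invmx (QS e kappa S)).

(* Terminal condition of the Swap Algorithm: no improving swap exists. *)
Definition swap_optimal (R : realFieldType) (n : nat) (e : rel 'I_n)
    (kappa : 'I_n -> R) (S : {set 'I_n}) : Prop :=
  forall i j : 'I_n, i \in S -> j \notin S ->
    ~~ (\tr (invmx (QS e kappa ((j |: S) :\ i))) < \tr (invmx (QS e kappa S))).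

(* Main.v *)
Require Import Defs.
From HB Require Import structures.
From mathcomp Require Import all_boot all_order all_algebra.
From mathcomp Require Import fingraph.
From mathcomp Require Import reals.
From mathcomp Require Import ring lra zify.
Set Implicit Arguments. Unset Strict Implicit. Unset Printing Implicit Defensive.
Import Order.TTheory GRing.Theory Num.Theory.
Local Open Scope ring_scope.

Definition nnmx (R : numDomainType) m p (A : 'M[R]_(m,p)) := forall i j, 0 <= A i j.

Lemma nnmx_mul (R : numDomainType) m p q (A : 'M[R]_(m,p)) (B : 'M[R]_(p,q)) :
  nnmx A -> nnmx B -> nnmx (A *m B).
Proof. move=> hA hB i j; rewrite mxE; apply: sumr_ge0 => l _; exact: mulr_ge0. Qed.

Lemma nnmx_add (R : numDomainType) m p (A B : 'M[R]_(m,p)) :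
  nnmx A -> nnmx B -> nnmx (A + B).
Proof. move=> hA hB i j; rewrite mxE; exact: addr_ge0. Qed.

Lemma nnmx_tr (R : numDomainType) n (A : 'M[R]_n) : nnmx A -> 0 <= \tr A.
Proof. by move=> hA; apply: sumr_ge0 => i _; exact: hA. Qed.

Lemma QS_entry (R : numFieldType) n (e : rel 'I_n) (kappa : 'I_n -> R) (S : {set 'I_n}) (i j : 'I_n) :
  QS e kappa S i j = if i == j then (#|[set l | e i l]|)%:R + kappa i * (i \in S)%:R
                     else - (e i j)%:R.
Proof.
rewrite /QS /laplacian !mxE; case: eqP => [->|_]; by rewrite ?mulr1n ?mulr0n ?addr0.
Qed.

Lemma deg_sum (R : numFieldType) n (e : rel 'I_n) (i : 'I_n) :
  (#|[set l | e i l]|)%:R = \sum_j (e i j)%:R :> R.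
Proof.
rewrite -sumr_const big_mkcond /=; apply: eq_bigr => j _; rewrite inE.
by case: (e i j).
Qed.

Lemma Qx_entry (R : numFieldType) n (e : rel 'I_n) (kappa : 'I_n -> R)
   (S : {set 'I_n}) (x : 'cV[R]_n) (i : 'I_n) :
  irreflexive e ->
  (QS e kappa S *m x) i 0 =
   \sum_j (e i j)%:R * (x i 0 - x j 0) + kappa i * (i \in S)%:R * x i 0.
Proof.
move=> Hirr; rewrite mxE (bigD1 i) //= QS_entry eqxx deg_sum.
rewrite [X in _ = X + _](bigD1 i) //= Hirr mul0r add0r.
rewrite (bigD1 i) //= Hirr add0r.
have -> : \sum_(j < n | j != i) QS e kappa S i j * x j 0 =
          - \sum_(j < n | j != i) (e i j)%:R * x j 0.
  rewrite -sumrN; apply: eq_bigr => j hj; rewrite QS_entry eq_sym (negbTE hj).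
  by rewrite mulNr.
have -> : \sum_(j < n | j != i) (e i j)%:R * (x i 0 - x j 0) =
          (\sum_(j < n | j != i) (e i j)%:R) * x i 0 - \sum_(j < n | j != i) (e i j)%:R * x j 0.
  rewrite mulr_suml -sumrB; apply: eq_bigr => j _; by rewrite mulrBr.
ring.
Qed.

Lemma minprin (R : realFieldType) n (e : rel 'I_n) (kappa : 'I_n -> R)
   (S : {set 'I_n}) (x : 'cV[R]_n) :
  irreflexive e -> connected_graph e -> (forall i, 0 < kappa i) -> S != set0 ->
  (forall i, 0 <= (QS e kappa S *m x) i 0) -> forall i, 0 <= x i 0.
Proof.
move=> Hirr Hc Hk HS Hx i0; rewrite leNgt; apply/negP => hneg.
have [m _ hm] := @arg_minP _ _ _ i0 predT (fun j => x j 0) isT.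
have hmneg : x m 0 < 0 by apply: le_lt_trans (hm i0 isT) hneg.
have step : forall a, x a 0 = x m 0 ->
    (forall b, e a b -> x b 0 = x m 0) /\ a \notin S.
  move=> a ha; have := Hx a; rewrite Qx_entry //.
  set F := fun b => (e a b)%:R * (x b 0 - x a 0).
  have hF : forall b, true -> 0 <= F b.
    move=> b _; rewrite /F; apply: mulr_ge0; first by rewrite ler0n.
    by rewrite subr_ge0 ha; exact: hm.
  have hsum : \sum_j (e a j)%:R * (x a 0 - x j 0) = - \sum_j F j.
    rewrite -sumrN; apply: eq_bigr => j _; rewrite /F; ring.
  rewrite hsum => h.
  have hG : 0 <= - (kappa a * (a \in S)%:R * x a 0).
    rewrite -mulrN; apply: mulr_ge0; first by apply: mulr_ge0; [exact: ltW | rewrite ler0n].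
    by rewrite oppr_ge0 ha ltW.
  have hS0 : 0 <= \sum_j F j by apply: sumr_ge0 => j _; exact: hF.
  have hsum0 : \sum_j F j = 0 by lra.
  have hG0 : kappa a * (a \in S)%:R * x a 0 = 0 by lra.
  split.
    move=> b eab; have := psumr_eq0P hF hsum0 (i:=b) isT; rewrite /F eab.
    move/eqP; rewrite mul1r subr_eq0 => /eqP ->; exact: ha.
  apply/negP => aS; move: hG0; rewrite aS mulr1 => /eqP; rewrite mulf_eq0.
  case/orP => /eqP h0.
    by have := Hk a; rewrite h0 ltxx.
  by move: hmneg; rewrite -ha h0 ltxx.
have gen : forall p a, x a 0 = x m 0 -> path e a p -> x (last a p) 0 = x m 0.
  elim=> [|b p IH] a ha //= /andP [eab pth]; apply: IH pth; exact: (step a ha).1 b eab.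
have [s sS] := set0Pn _ HS.
have /connectP [p pth hs] := Hc m s.
suff hs0 : x s 0 = x m 0 by have := (step s hs0).2; rewrite sS.
by rewrite hs; apply: gen.
Qed.

Lemma QS_unit (R : realFieldType) n (e : rel 'I_n) (kappa : 'I_n -> R) (S : {set 'I_n}) :
  irreflexive e -> connected_graph e -> (forall i, 0 < kappa i) -> S != set0 ->
  QS e kappa S \in unitmx.
Proof.
move=> Hirr Hc Hk HS.
rewrite -unitmx_tr -row_free_unit -kermx_eq0; apply/eqP/row_matrixP => i; rewrite row0.
set y := row i (kermx _).
have hy : y *m (QS e kappa S)^T = 0 by apply/sub_kermxP; exact: row_sub.
have hx : QS e kappa S *m y^T = 0 by rewrite -[LHS]trmxK trmx_mul trmxK hy trmx0.
have h1 : forall j, 0 <= y^T j 0.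
  by apply: (@minprin R n e kappa S) => // l; rewrite hx mxE.
have h2 : forall j, 0 <= (- y^T) j 0.
  by apply: (@minprin R n e kappa S) => // l; rewrite mulmxN hx oppr0 mxE.
apply/rowP => j; rewrite [RHS]mxE.
have := h1 j; have := h2 j; rewrite !mxE; lra.
Qed.

Lemma QS_inv_nn (R : realFieldType) n (e : rel 'I_n) (kappa : 'I_n -> R) (S : {set 'I_n}) :
  irreflexive e -> connected_graph e -> (forall i, 0 < kappa i) -> S != set0 ->
  nnmx (invmx (QS e kappa S)).
Proof.
move=> Hirr Hc Hk HS i j.
have hu := QS_unit Hirr Hc Hk HS.
have := @minprin R n e kappa S (col j (invmx (QS e kappa S))) Hirr Hc Hk HS.
rewrite colE mulmxA mulmxV // mul1mx => h.
have := h _ i; rewrite -colE mxE; apply => l; rewrite mxE; exact: ler0n.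
Qed.

Lemma resolvent (R : fieldType) n (A B : 'M[R]_n) : A \in unitmx -> B \in unitmx ->
  invmx A - invmx B = invmx A *m (B - A) *m invmx B.
Proof.
by move=> uA uB; rewrite mulmxBr mulVmx // mulmxBl mulmxK // mul1mx.
Qed.

Lemma mxBE (R : zmodType) m p (A B : 'M[R]_(m,p)) i j : (A - B) i j = A i j - B i j.
Proof. by rewrite !mxE. Qed.
Lemma mxDE (R : zmodType) m p (A B : 'M[R]_(m,p)) i j : (A + B) i j = A i j + B i j.
Proof. by rewrite !mxE. Qed.

Lemma QS_diff_nn (R : realFieldType) n (e : rel 'I_n) (kappa : 'I_n -> R) (A A' : {set 'I_n}) :
  (forall i, 0 < kappa i) -> A \subset A' -> nnmx (QS e kappa A' - QS e kappa A).
Proof.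
move=> hk hAA' i j; rewrite mxBE !QS_entry; case: eqP => [->|_]; last first.
  by rewrite subrr.
rewrite subr_ge0 lerD2l; case hA: (j \in A).
  by rewrite (subsetP hAA' j hA).
rewrite mulr0; apply: mulr_ge0; [exact: ltW | exact: ler0n].
Qed.

Lemma QS_modular (R : realFieldType) n (e : rel 'I_n) (kappa : 'I_n -> R) (X Y : {set 'I_n}) :
  QS e kappa (X :|: Y) + QS e kappa (X :&: Y) = QS e kappa X + QS e kappa Y.
Proof.
apply/matrixP => i j; rewrite !mxE !inE; case: (i == j); case: (i \in X); case: (i \in Y); rewrite /= ?mulr1n ?mulr0n; ring.
Qed.

Definition ftr (R : realFieldType) n (e : rel 'I_n) (kappa : 'I_n -> R) (S : {set 'I_n}) :=
  \tr (invmx (QS e kappa S)).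

Lemma ftr_ge0 (R : realFieldType) n (e : rel 'I_n) (kappa : 'I_n -> R) (S : {set 'I_n}) :
  irreflexive e -> connected_graph e -> (forall i, 0 < kappa i) -> S != set0 ->
  0 <= ftr e kappa S.
Proof. by move=> *; apply: nnmx_tr; apply: QS_inv_nn. Qed.

Lemma ftr_mono (R : realFieldType) n (e : rel 'I_n) (kappa : 'I_n -> R) (A A' : {set 'I_n}) :
  irreflexive e -> connected_graph e -> (forall i, 0 < kappa i) -> A != set0 ->
  A \subset A' -> ftr e kappa A' <= ftr e kappa A.
Proof.
move=> Hirr Hc Hk HA hAA'.
have HA' : A' != set0.
  by case/set0Pn: HA => a aA; apply/set0Pn; exists a; exact: (subsetP hAA').
rewrite -subr_ge0 /ftr -raddfB /= resolvent; try exact: QS_unit.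
apply: nnmx_tr; apply: nnmx_mul; first apply: nnmx_mul.
- exact: QS_inv_nn.
- exact: QS_diff_nn.
- exact: QS_inv_nn.
Qed.

Lemma ftr_supm (R : realFieldType) n (e : rel 'I_n) (kappa : 'I_n -> R) (X Y : {set 'I_n}) :
  irreflexive e -> connected_graph e -> (forall i, 0 < kappa i) -> X :&: Y != set0 ->
  ftr e kappa X + ftr e kappa Y <= ftr e kappa (X :&: Y) + ftr e kappa (X :|: Y).
Proof.
move=> Hirr Hc Hk HM.
have ne : forall A : {set 'I_n}, X :&: Y \subset A -> A != set0.
  by move=> A hA; case/set0Pn: HM => a aA; apply/set0Pn; exists a; exact: (subsetP hA).
have nX := ne X (subsetIl X Y); have nY := ne Y (subsetIr X Y).
have nZ := ne (X :|: Y) (subset_trans (subsetIl X Y) (subsetUl X Y)).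
have hmod := QS_modular e kappa X Y.
set QM := QS e kappa (X :&: Y) in hmod *; set QZ := QS e kappa (X :|: Y) in hmod *.
set QX := QS e kappa X in hmod *; set QY := QS e kappa Y in hmod *.
have uM : QM \in unitmx by exact: QS_unit.
have uX : QX \in unitmx by exact: QS_unit.
have uY : QY \in unitmx by exact: QS_unit.
have uZ : QZ \in unitmx by exact: QS_unit.
have hZY : QZ - QY = QX - QM by apply/eqP; rewrite subr_eq addrAC -hmod addrK.
have hZX : QZ - QX = QY - QM by apply/eqP; rewrite subr_eq addrAC [QY + QX]addrC -hmod addrK.
have e1 := resolvent uM uX; have e2 := resolvent uY uZ; rewrite hZY in e2.
have e3 := resolvent uM uY; have e4 := resolvent uX uZ; rewrite hZX in e4.
set a := QX - QM in e1 e2 *; set b := QY - QM in e3 e4 *.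
have key : (invmx QM - invmx QX) - (invmx QY - invmx QZ) =
   invmx QM *m b *m invmx QY *m a *m invmx QX +
   invmx QY *m a *m (invmx QX *m b *m invmx QZ).
  rewrite e1 e2 -e3 -e4 !mulmxBl !mulmxBr.
  by rewrite addrA subrK.
have hnn : nnmx ((invmx QM - invmx QX) - (invmx QY - invmx QZ)).
  rewrite key; apply: nnmx_add; repeat apply: nnmx_mul;
    by [apply: QS_inv_nn | apply: QS_diff_nn => //; rewrite ?subsetIl ?subsetIr].
have := nnmx_tr hnn; rewrite !raddfB /= /ftr -/QM -/QX -/QY -/QZ; lra.
Qed.

Theorem theorem4 (R : realType) (n : nat) (e : rel 'I_n)
    (kappa : 'I_n -> R) (k : nat) (Hhat B : R) (Ss : {set 'I_n}) :
  simple_graph e ->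
  connected_graph e ->
  (forall i, 0 < kappa i) ->
  (1 <= k)%N ->
  (* Hhat = min { H(S) : S nonempty, |S| <= k } *)
  (exists S : {set 'I_n}, [/\ S != set0, (#|S| <= k)%N & Hhat = Hcost e kappa S]) ->
  (forall S : {set 'I_n}, S != set0 -> (#|S| <= k)%N -> Hhat <= Hcost e kappa S) ->
  (* B = max_v tr(Q_v^{-1}) *)
  (exists v : 'I_n, B = \tr (invmx (QS e kappa [set v]))) ->
  (forall v : 'I_n, \tr (invmx (QS e kappa [set v])) <= B) ->
  (* Ss is an output of the Swap Algorithm: |Ss| = k and no improving swap *)
  #|Ss| = k ->
  swap_optimal e kappa Ss ->
  Hcost e kappa Ss <=
    (1 - (k.-1)%:R / (2 * k - 1)%:R) * Hhat + B * ((k.-1)%:R / (2 * k - 1)%:R).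
Proof.
move=> [Hsym Hirr] Hc Hk Hk1 [T [HT0 HTk HH]] _ _ HB HSs Hsw.
pose f := ftr e kappa.
have mono : forall A A' : {set 'I_n}, A != set0 -> A \subset A' -> f A' <= f A.
  by move=> A A' h1 h2; exact: ftr_mono.
have supm : forall X Y : {set 'I_n}, X :&: Y != set0 ->
    f X + f Y <= f (X :&: Y) + f (X :|: Y).
  by move=> X Y h; exact: ftr_supm.
have pos : forall A : {set 'I_n}, A != set0 -> 0 <= f A.
  by move=> A h; exact: ftr_ge0.
have HB' : forall v, f [set v] <= B := HB.
have Hsw' : forall i j, i \in Ss -> j \notin Ss -> f Ss <= f ((j |: Ss) :\ i).
  by move=> i j hi hj; rewrite leNgt; exact: Hsw.
have HfT := pos T HT0.
case: k Hk1 HTk HSs => [//|k'] _ HTk HSs.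
have main : (2 * k'%:R + 1) * f Ss <= (k'%:R + 1) * f T + 2 * k'%:R * B.
  case: k' HTk HSs => [|k'] HTk HSs.
    suff hST : f Ss <= f T by rewrite mulr0n; lra.
    have /cards1P [s hS] : #|Ss| == 1%N by rewrite HSs.
    rewrite hS; rewrite hS in Hsw'.
    have : #|T| == 1%N by rewrite eqn_leq HTk card_gt0.
    case/cards1P => t hT; rewrite hT.
    case: (eqVneq t s) => [-> //|hts].
    have := Hsw' s t (set11 s); rewrite inE hts => /(_ isT).
    suff -> : (t |: [set s]) :\ s = [set t] by [].
    apply/setP => x; rewrite !inE; case: (eqVneq x s) => [->|_] /=.
      by rewrite eq_sym (negbTE hts).
    by rewrite orbF.
  set S := Ss in HSs Hsw' *.
  have [s0 s0S] : exists s0, s0 \in S.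
    by apply/set0Pn; rewrite -card_gt0 HSs.
  have fSB : f S <= B.
    apply: le_trans (HB' s0); apply: mono; first by apply/set0Pn; exists s0; rewrite inE.
    by rewrite sub1set.
  have hS' : S :\ s0 != set0.
    by rewrite -card_gt0; move: HSs; rewrite (cardsD1 s0) s0S add1n; case => ->.
  have [v vS'] := set0Pn _ hS'.
  have fS'B : f (S :\ s0) <= B.
    apply: le_trans (HB' v); apply: mono; first by apply/set0Pn; exists v; rewrite inE.
    by rewrite sub1set.
  have hc : forall j, f S - f (j |: S) <= B - f S.
    move=> j; case jS: (j \in S).
      have -> : j |: S = S by apply/setP => x; rewrite !inE; case: eqP => // ->.
      by rewrite subrr subr_ge0.
    set Y := (j |: S) :\ s0.
    have eqI : S :&: Y = S :\ s0.
      apply/setP => z; rewrite !inE; case: (eqVneq z s0) => [->|_] /=; first by rewrite andbF.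
      by case: (z \in S); rewrite ?orbT.
    have eqU : S :|: Y = j |: S.
      apply/setP => z; rewrite !inE; case: (eqVneq z s0) => [->|_] /=.
        by rewrite s0S orbT.
      by case: (z \in S); rewrite ?orbT ?orbF.
    have := supm S Y; rewrite eqI eqU => /(_ hS') h1.
    have := Hsw' s0 j s0S; rewrite jS => /(_ isT) h2.
    rewrite -/Y in h2; lra.
  have hc0 : 0 <= B - f S by rewrite subr_ge0.
  have claimB : forall m (U : {set 'I_n}), #|U| = m -> f S - f (S :|: U) <= m%:R * (B - f S).
    elim=> [|m IH] U hU.
      move/eqP: hU; rewrite cards_eq0 => /eqP ->; rewrite setU0 subrr mul0r.
      exact: lexx.
    have [j jU] : exists j, j \in U by apply/set0Pn; rewrite -card_gt0 hU.
    have hU' : #|U :\ j| = m by move: hU; rewrite (cardsD1 j) jU; case.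
    have := IH _ hU'.
    set X := S :|: U :\ j.
    have hXY : S \subset X :&: (j |: S).
      by apply/subsetP => x xS; rewrite !inE xS orbT.
    have nXY : X :&: (j |: S) != set0.
      by apply/set0Pn; exists s0; exact: (subsetP hXY).
    have h1 := supm X (j |: S) nXY.
    have nS : S != set0 by apply/set0Pn; exists s0.
    have h2 := mono S _ nS hXY.
    have eqU : X :|: (j |: S) = S :|: U.
      apply/setP => z; rewrite !inE; case: (eqVneq z j) => [->|_] /=.
        by rewrite jU !orbT.
      by case: (z \in S); case: (z \in U).
    rewrite eqU in h1; have h3 := hc j.
    rewrite -addn1 natrD mulrDl mul1r => h4; lra.
  have hT1 := claimB _ T erefl.
  have hT2 : f (S :|: T) <= f T by apply: mono => //; exact: subsetUr.
  have hT3 : #|T|%:R * (B - f S) <= k'.+2%:R * (B - f S).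
    by apply: ler_wpM2r => //; rewrite ler_nat.
  have hK : 1 <= k'.+1%:R :> R by rewrite ler1n.
  have h5 : (k'.+1%:R - 1) * f S <= (k'.+1%:R - 1) * B.
    by apply: ler_wpM2l => //; rewrite subr_ge0.
  have h6 : 0 <= k'.+1%:R * f T by apply: mulr_ge0 => //; exact: ler0n.
  rewrite -addn1 natrD /= in hT3.
  nra.
rewrite HH /Hcost -/(f Ss) -/(f T) /=.
have -> : (2 * k'.+1 - 1)%N = (2 * k' + 1)%N by lia.
rewrite natrD natrM.
set K := k'%:R in main *.
have hK : 0 <= K by exact: ler0n.
rewrite -subr_ge0.
have -> : (1 - K / (2%:R * K + 1%:R)) * (2^-1 * f T) + B * (K / (2%:R * K + 1%:R)) -
    2^-1 * f Ss = ((K + 1) * f T + 2 * K * B - (2 * K + 1) * f Ss) / (2 * (2 * K + 1)).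
  field; lra.
apply: divr_ge0; lra.
Qed.
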